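(* Let $\alpha$ be an action of a discrete group $G$ on a non-compact locally compact Hausdorff space $X$ with more than two points, such that for every compact $K\subseteq X$ and every nonempty open $U\subseteq X$ there exists $g\in G$ with $\alpha_g(K)\subseteq U$. Then the induced action $\sigma_g(f)=f\circ\alpha_g^{-1}$ on $C_0(X)$ is $G$-separating.
   Context: $\sigma$ is $G$-separating if for all $a,b\in C_0(X)_+$, $c\in C_0(X)$, $\varepsilon>0$ there exist $s,t\in C_0(X)$, $g,h\in G$ with $\|s^*as-\sigma_g(a)\|<\varepsilon$, $\|t^*bt-\sigma_h(b)\|<\varepsilon$, $\|s^*ct\|<\varepsilon$. *)

(* Defs.v *)
From Stdlib Require Import Reals List.
Open Scope R_scope.

Definition C := (R * R)%type.
Definition Cre (z : C) : R := fst z.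
Definition Cim (z : C) : R := snd z.
Definition Cmul (z w : C) : C :=
  (Cre z * Cre w - Cim z * Cim w, Cre z * Cim w + Cim z * Cre w).
Definition Csub (z w : C) : C := (Cre z - Cre w, Cim z - Cim w).
Definition Cconj (z : C) : C := (Cre z, - Cim z).
Definition Cmod (z : C) : R := sqrt (Cre z * Cre z + Cim z * Cim z).

Definition is_topology {X : Type} (opn : (X -> Prop) -> Prop) : Prop :=
  opn (fun _ => True) /\
  (forall (I : Type) (F : I -> X -> Prop),
      (forall i, opn (F i)) -> opn (fun x => exists i, F i x)) /\
  (forall U V, opn U -> opn V -> opn (fun x => U x /\ V x)).

Definition is_compact {X : Type} (opn : (X -> Prop) -> Prop) (K : X -> Prop) : Prop :=
  forall (I : Type) (F : I -> X -> Prop),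
    (forall i, opn (F i)) ->
    (forall x, K x -> exists i, F i x) ->
    exists l : list I, forall x, K x -> exists i, In i l /\ F i x.

Definition hausdorff {X : Type} (opn : (X -> Prop) -> Prop) : Prop :=
  forall x y : X, x <> y ->
    exists U V, opn U /\ opn V /\ U x /\ V y /\ (forall z, ~ (U z /\ V z)).

Definition locally_compact {X : Type} (opn : (X -> Prop) -> Prop) : Prop :=
  forall x : X, exists U K, opn U /\ U x /\ is_compact opn K /\ (forall y, U y -> K y).

Definition continuous {X Y : Type} (opnX : (X -> Prop) -> Prop)
  (opnY : (Y -> Prop) -> Prop) (f : X -> Y) : Prop :=
  forall V, opnY V -> opnX (fun x => V (f x)).

Definition more_than_two_points (X : Type) : Prop :=
  exists x y z : X, x <> y /\ y <> z /\ x <> z.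

Definition is_group {G : Type} (mul : G -> G -> G) (e : G) (inv : G -> G) : Prop :=
  (forall a b c, mul a (mul b c) = mul (mul a b) c) /\
  (forall a, mul e a = a) /\ (forall a, mul a e = a) /\
  (forall a, mul (inv a) a = e) /\ (forall a, mul a (inv a) = e).

(* action of the (discrete) group G on X by homeomorphisms
   (continuity of each alpha_g; continuity of the inverse alpha_{g^-1} follows) *)
Definition is_continuous_action {G X : Type} (mul : G -> G -> G) (e : G)
  (opn : (X -> Prop) -> Prop) (alpha : G -> X -> X) : Prop :=
  (forall x, alpha e x = x) /\
  (forall g h x, alpha (mul g h) x = alpha g (alpha h x)) /\
  (forall g, continuous opn opn (alpha g)).

Definition continuous_C {X : Type} (opn : (X -> Prop) -> Prop) (f : X -> C) : Prop :=
  forall x (eps : R), 0 < eps ->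
    exists U, opn U /\ U x /\ forall y, U y -> Cmod (Csub (f y) (f x)) < eps.

Definition vanishes_at_infinity {X : Type} (opn : (X -> Prop) -> Prop) (f : X -> C) : Prop :=
  forall eps : R, 0 < eps ->
    exists K, is_compact opn K /\ forall x, ~ K x -> Cmod (f x) < eps.

Definition in_C0 {X : Type} (opn : (X -> Prop) -> Prop) (f : X -> C) : Prop :=
  continuous_C opn f /\ vanishes_at_infinity opn f.

Definition in_C0_pos {X : Type} (opn : (X -> Prop) -> Prop) (f : X -> C) : Prop :=
  in_C0 opn f /\ forall x, Cim (f x) = 0 /\ 0 <= Cre (f x).

Definition supnorm_lt {X : Type} (f : X -> C) (eps : R) : Prop :=
  exists M : R, M < eps /\ forall x, Cmod (f x) <= M.

Definition fmul {X : Type} (f g : X -> C) : X -> C := fun x => Cmul (f x) (g x).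
Definition fsub {X : Type} (f g : X -> C) : X -> C := fun x => Csub (f x) (g x).
Definition fstar {X : Type} (f : X -> C) : X -> C := fun x => Cconj (f x).

Definition sigma {G X : Type} (inv : G -> G) (alpha : G -> X -> X) (g : G) (f : X -> C)
  : X -> C := fun x => f (alpha (inv g) x).

Definition G_separating {G X : Type} (opn : (X -> Prop) -> Prop) (inv : G -> G)
  (alpha : G -> X -> X) : Prop :=
  forall (a b c : X -> C) (eps : R),
    in_C0_pos opn a -> in_C0_pos opn b -> in_C0 opn c -> 0 < eps ->
    exists (s t : X -> C) (g h : G),
      in_C0 opn s /\ in_C0 opn t /\
      supnorm_lt (fsub (fmul (fmul (fstar s) a) s) (sigma inv alpha g a)) eps /\
      supnorm_lt (fsub (fmul (fmul (fstar t) b) t) (sigma inv alpha h b)) eps /\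
      supnorm_lt (fmul (fmul (fstar s) c) t) eps.

(* Main.v *)
Require Import Defs.
From Stdlib Require Import Reals List Lra Classical.
Open Scope R_scope.

Definition rcont {X : Type} (opn : (X -> Prop) -> Prop) (f : X -> R) : Prop :=
  forall x eps, 0 < eps -> exists U, opn U /\ U x /\ forall y, U y -> Rabs (f y - f x) < eps.

Lemma cont_id x : continuity_pt (fun u => u) x.
Proof. apply derivable_continuous_pt. apply derivable_pt_id. Qed.

Lemma cpt_eps (phi : R -> R) u : continuity_pt phi u -> forall eps, 0 < eps ->
  exists d, 0 < d /\ forall v, Rabs (v - u) < d -> Rabs (phi v - phi u) < eps.
Proof.
  intros H eps He. destruct (H eps He) as [d [Hd Hv]]. exists d; split; auto.
  intros v Hvd. destruct (Req_dec v u) as [->|Hne].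
  - unfold Rminus; rewrite Rplus_opp_r, Rabs_R0; auto.
  - apply (Hv v). split. split; [exact I| auto]. simpl. unfold R_dist. exact Hvd.
Qed.

Lemma rcont_ext {X} opn (f g : X -> R) : (forall y, f y = g y) -> rcont opn f -> rcont opn g.
Proof.
  intros E H x eps He. destruct (H x eps He) as [U [HU [Ux HUy]]].
  exists U; repeat split; auto. intros y Uy. rewrite <- !E. auto.
Qed.

Lemma rcont_cpt {X} opn (f : X -> R) (phi : R -> R) :
  (forall x, continuity_pt phi (f x)) -> rcont opn f -> rcont opn (fun y => phi (f y)).
Proof.
  intros Hc H x eps He. destruct (cpt_eps _ _ (Hc x) eps He) as [d [Hd Hv]].
  destruct (H x d Hd) as [U [HU [Ux HUy]]]. exists U; repeat split; auto.
Qed.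

Lemma rcont_lip {X} opn (f : X -> R) (phi : R -> R) :
  (forall u v, Rabs (phi u - phi v) <= Rabs (u - v)) -> rcont opn f -> rcont opn (fun y => phi (f y)).
Proof.
  intros Hc H x eps He.
  destruct (H x eps He) as [U [HU [Ux HUy]]]. exists U; repeat split; auto.
  intros y Uy. eapply Rle_lt_trans; [apply Hc| auto].
Qed.

Lemma rcont_plus {X} opn (f g : X -> R) : is_topology opn ->
  rcont opn f -> rcont opn g -> rcont opn (fun y => f y + g y).
Proof.
  intros [_ [_ Hi]] Hf Hg x eps He.
  destruct (Hf x (eps/2)) as [U [HU [Ux HUy]]]; [lra|].
  destruct (Hg x (eps/2)) as [V [HV [Vx HVy]]]; [lra|].
  exists (fun z => U z /\ V z). repeat split; auto.
  intros y [Uy Vy]. specialize (HUy y Uy). specialize (HVy y Vy).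
  replace (f y + g y - (f x + g x)) with ((f y - f x) + (g y - g x)) by ring.
  eapply Rle_lt_trans; [apply Rabs_triang|]. lra.
Qed.

Lemma rcont_mult {X} opn (f g : X -> R) : is_topology opn ->
  rcont opn f -> rcont opn g -> rcont opn (fun y => f y * g y).
Proof.
  intros Ht Hf Hg.
  assert (Hng : rcont opn (fun y => - g y)).
  { apply (rcont_lip opn g (fun u => - u)); auto. intros u v.
    replace (- u - - v) with (- (u - v)) by ring. rewrite Rabs_Ropp. lra. }
  assert (H1 : rcont opn (fun y => (f y + g y) * (f y + g y))).
  { apply (rcont_cpt opn (fun y => f y + g y) (fun u => u * u)).
    intros; apply continuity_pt_mult; apply cont_id. apply rcont_plus; auto. }
  assert (H2 : rcont opn (fun y => - ((f y + - g y) * (f y + - g y)))).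
  { apply (rcont_lip opn _ (fun u => - u)).
    intros u v. replace (- u - - v) with (- (u - v)) by ring. rewrite Rabs_Ropp. lra.
    apply (rcont_cpt opn (fun y => f y + - g y) (fun u => u * u)).
    intros; apply continuity_pt_mult; apply cont_id. apply rcont_plus; auto. }
  assert (H3 := rcont_plus opn _ _ Ht H1 H2).
  assert (L4 : forall u v, Rabs (u / 4 - v / 4) <= Rabs (u - v)).
  { intros u v. replace (u/4 - v/4) with ((u - v) * /4) by field.
    rewrite Rabs_mult, (Rabs_right (/4)) by lra.
    assert (0 <= Rabs (u - v)) by apply Rabs_pos; lra. }
  assert (H4 := rcont_lip opn _ (fun u => u / 4) L4 H3).
  refine (rcont_ext opn _ _ _ H4). intros y; simpl; field.
Qed.

Lemma Cmod_real u : Cmod (u, 0) = Rabs u.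
Proof. unfold Cmod, Cre, Cim; simpl. rewrite Rmult_0_l, Rplus_0_r. apply sqrt_Rsqr_abs. Qed.

Lemma Cmod_ge_re z : Rabs (Cre z) <= Cmod z.
Proof.
  unfold Cmod. rewrite <- sqrt_Rsqr_abs. apply sqrt_le_1_alt. unfold Rsqr.
  assert (0 <= Cim z * Cim z) by apply Rle_0_sqr. lra.
Qed.

Lemma rcont_Re {X} opn (a : X -> Defs.C) : continuous_C opn a -> rcont opn (fun x => Cre (a x)).
Proof.
  intros H x eps He. destruct (H x eps He) as [U [HU [Ux HUy]]].
  exists U; repeat split; auto. intros y Uy. eapply Rle_lt_trans; [|apply (HUy y Uy)].
  apply (Cmod_ge_re (Csub (a y) (a x))).
Qed.

Lemma contC_of_rcont {X} opn (f : X -> R) : rcont opn f -> continuous_C opn (fun x => (f x, 0)).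
Proof.
  intros H x eps He. destruct (H x eps He) as [U [HU [Ux HUy]]].
  exists U; repeat split; auto. intros y Uy. unfold Csub, Cre, Cim; simpl.
  rewrite Rminus_diag. rewrite Cmod_real. auto.
Qed.

Lemma rcont_comp {X} opn (f : X -> R) (h : X -> X) : continuous opn opn h ->
  rcont opn f -> rcont opn (fun x => f (h x)).
Proof.
  intros Hh H x eps He. destruct (H (h x) eps He) as [U [HU [Ux HUy]]].
  exists (fun y => U (h y)); repeat split; auto.
Qed.

Lemma two_compact {X} opn (x y : X) : is_compact opn (fun z => z = x \/ z = y).
Proof.
  intros I F _ Hc. destruct (Hc x (or_introl eq_refl)) as [i Hi].
  destruct (Hc y (or_intror eq_refl)) as [j Hj].
  exists (i :: j :: nil). intros z [->| ->]. exists i; simpl; auto. exists j; simpl; auto.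
Qed.

Lemma act_inv_r {G X} (mul : G -> G -> G) e inv opn (alpha : G -> X -> X) :
  is_group mul e inv -> is_continuous_action mul e opn alpha ->
  forall g x, alpha g (alpha (inv g) x) = x.
Proof.
  intros [_ [_ [_ [_ Hr]]]] [He [Hm _]] g x. rewrite <- Hm, Hr, He. auto.
Qed.

Lemma act_inv_l {G X} (mul : G -> G -> G) e inv opn (alpha : G -> X -> X) :
  is_group mul e inv -> is_continuous_action mul e opn alpha ->
  forall g x, alpha (inv g) (alpha g x) = x.
Proof.
  intros [_ [_ [_ [Hl _]]]] [He [Hm _]] g x. rewrite <- Hm, Hl, He. auto.
Qed.

Lemma two_points {G X} (mul : G -> G -> G) e inv (opn : (X -> Prop) -> Prop) alpha :
  is_group mul e inv -> is_continuous_action mul e opn alpha ->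
  more_than_two_points X ->
  (forall K U : X -> Prop, is_compact opn K -> opn U -> (exists x, U x) ->
      exists g : G, forall x, K x -> U (alpha g x)) ->
  forall O, opn O -> (exists x, O x) -> exists x y, x <> y /\ O x /\ O y.
Proof.
  intros Hg Ha [x [y [z [Hxy _]]]] Hc O HO Hne.
  destruct (Hc _ O (two_compact opn x y) HO Hne) as [g Hgx].
  exists (alpha g x), (alpha g y). repeat split; auto.
  intros E. apply Hxy. rewrite <- (act_inv_l _ _ _ _ _ Hg Ha g x), E.
  apply (act_inv_l _ _ _ _ _ Hg Ha).
Qed.

Lemma separate {G X} (mul : G -> G -> G) e inv (opn : (X -> Prop) -> Prop) alpha :
  is_group mul e inv -> is_continuous_action mul e opn alpha -> is_topology opn ->
  hausdorff opn ->
  more_than_two_points X ->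
  (forall K U : X -> Prop, is_compact opn K -> opn U -> (exists x, U x) ->
      exists g : G, forall x, K x -> U (alpha g x)) ->
  forall O1 O2, opn O1 -> (exists x, O1 x) -> opn O2 -> (exists x, O2 x) ->
  exists P1 P2, opn P1 /\ opn P2 /\ (exists x, P1 x) /\ (exists x, P2 x) /\
    (forall x, P1 x -> O1 x) /\ (forall x, P2 x -> O2 x) /\ (forall x, ~ (P1 x /\ P2 x)).
Proof.
  intros Hg Ha [_ [_ Hi]] Hh H3 Hc O1 O2 H1 Hn1 H2 [b Hb].
  destruct (two_points _ _ _ _ _ Hg Ha H3 Hc O1 H1 Hn1) as [x [y [Hxy [Ox Oy]]]].
  assert (exists a, O1 a /\ a <> b) as [a [Oa Hab]].
  { destruct (classic (x = b)) as [->|N]; [exists y|exists x]; split; auto. }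
  destruct (Hh a b Hab) as [U [V [HU [HV [Ua [Vb Hd]]]]]].
  exists (fun z => O1 z /\ U z), (fun z => O2 z /\ V z).
  split; [auto|]. split; [auto|]. split; [exists a; auto|]. split; [exists b; auto|].
  split; [intros z [? _]; auto|]. split; [intros z [? _]; auto|].
  intros z [[_ Uz] [_ Vz]]. apply (Hd z); auto.
Qed.

Lemma getO {X} (opn : (X -> Prop) -> Prop) (A : X -> R) (d : R) :
  is_topology opn -> rcont opn A -> (exists x : X, True) ->
  exists O, opn O /\ (exists x, O x) /\ forall x, O x -> d < A x \/ forall y, A y <= d.
Proof.
  intros [HT _] HA [x0 _].
  destruct (classic (exists x, d < A x)) as [[x Hx]|N].
  - destruct (HA x (A x - d)) as [U [HU [Ux HUy]]]; [lra|].
    exists U; split; auto; split; [exists x; auto|].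
    intros y Uy. left. specialize (HUy y Uy). apply Rabs_def2 in HUy. lra.
  - exists (fun _ => True). split; auto. split; [exists x0; auto|].
    intros z _. right. intros y. apply Rnot_lt_le. intro. apply N. exists y; auto.
Qed.

Lemma build_s {G X} (mul : G -> G -> G) e inv (opn : (X -> Prop) -> Prop) alpha
 (Hgrp : is_group mul e inv) (Htop : is_topology opn) (Hact : is_continuous_action mul e opn alpha)
 (a : X -> Defs.C) (Ha : in_C0_pos opn a) (d : R) (Hd : 0 < d) (K : X -> Prop) (HK : is_compact opn K)
 (HKa : forall x, ~ K x -> Cmod (a x) < d) (O : X -> Prop)
 (HO : forall x, O x -> d < Cre (a x) \/ forall y, Cre (a y) <= d)
 (g : G) (Hg : forall x, K x -> O (alpha g x)) :
 exists s, in_C0 opn s /\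
   (forall x, Cmod (fsub (fmul (fmul (fstar s) a) s) (Defs.sigma inv alpha g a) x) <= d) /\
   (forall x, s x = (0,0) \/ O x).
Proof.
  destruct Ha as [[Hac Hav] Hap].
  assert (HaE : forall x, a x = (Cre (a x), 0)).
  { intros x. destruct (Hap x) as [Hi _]. destruct (a x) as [p q]. unfold Cim in Hi; simpl in Hi.
    subst; reflexivity. }
  assert (HA0 : forall x, 0 <= Cre (a x)) by (intros x; apply Hap).
  assert (HCm : forall x, Cmod (a x) = Cre (a x)).
  { intros x. rewrite HaE, Cmod_real. apply Rabs_right. apply Rle_ge, HA0. }
  pose (A := fun x => Cre (a x)).
  pose (Ap := fun x => A (alpha (inv g) x)).
  pose (r := fun x => sqrt (Rmax 0 (Ap x - d) * / Rmax d (A x))).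
  assert (Hkey : forall x, d < Ap x -> d < A x /\ O x).
  { intros x H. assert (K (alpha (inv g) x)).
    { apply NNPP. intro N. specialize (HKa _ N). rewrite HCm in HKa. unfold Ap, A in H. lra. }
    assert (O x). { rewrite <- (act_inv_r _ _ _ _ _ Hgrp Hact g x). auto. }
    split; auto. destruct (HO x H1) as [|H2]; auto. specialize (H2 (alpha (inv g) x)).
    unfold Ap, A in H. lra. }
  assert (Hr0 : forall x, Ap x <= d -> r x = 0).
  { intros x H. unfold r. rewrite Rmax_left by lra. rewrite Rmult_0_l. apply sqrt_0. }
  assert (Hr1 : forall x, d < Ap x -> r x * r x * A x = Ap x - d).
  { intros x H. destruct (Hkey x H) as [H1 _]. unfold r.
    rewrite Rmax_right by lra. rewrite Rmax_right by lra.
    rewrite sqrt_sqrt. field. lra.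
    apply Rmult_le_pos. lra. left. apply Rinv_0_lt_compat. lra. }
  exists (fun x => (r x, 0)). split; [split|split].
  - apply contC_of_rcont.
    assert (RA : rcont opn A) by (apply rcont_Re; auto).
    assert (RAp : rcont opn Ap).
    { apply (rcont_comp opn A). destruct Hact as [_ [_ Hc]]; apply Hc. auto. }
    assert (R1 : rcont opn (fun x => Rmax 0 (Ap x - d))).
    { apply (rcont_lip opn Ap (fun u => Rmax 0 (u - d))); auto.
      intros u v. unfold Rmax. destruct (Rle_dec 0 (u - d)), (Rle_dec 0 (v - d));
        unfold Rabs; repeat destruct Rcase_abs; lra. }
    assert (R2 : rcont opn (fun x => / Rmax d (A x))).
    { apply (rcont_cpt opn (fun x => Rmax d (A x)) (fun u => / u)).
      intros x. apply (continuity_pt_inv (fun u => u)). apply cont_id.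
      assert (d <= Rmax d (A x)) by apply Rmax_l. lra.
      apply (rcont_lip opn A (fun u => Rmax d u)); auto.
      intros u v. unfold Rmax. destruct (Rle_dec d u), (Rle_dec d v);
        unfold Rabs; repeat destruct Rcase_abs; lra. }
    apply (rcont_cpt opn _ sqrt).
    + intros x. apply continuity_pt_sqrt. apply Rmult_le_pos. apply Rmax_l.
      left. apply Rinv_0_lt_compat. assert (d <= Rmax d (A x)) by apply Rmax_l. lra.
    + apply rcont_mult; auto.
  - intros eps He. exists (fun x => K (alpha (inv g) x)). split.
    + intros I F HF Hcov.
      destruct (HK I (fun i y => F i (alpha g y))) as [l Hl].
      { intros i. destruct Hact as [_ [_ Hc]]. apply Hc. auto. }
      { intros y Ky. apply Hcov. rewrite (act_inv_l _ _ _ _ _ Hgrp Hact). auto. }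
      exists l. intros x Kx. destruct (Hl _ Kx) as [i [Hi Fi]]. exists i; split; auto.
      rewrite (act_inv_r _ _ _ _ _ Hgrp Hact) in Fi. auto.
    + intros x Nx. rewrite Hr0. rewrite Cmod_real, Rabs_R0. auto.
      specialize (HKa _ Nx). rewrite HCm in HKa. unfold Ap, A. lra.
  - intros x.
    assert (E : fsub (fmul (fmul (fstar (fun x0 : X => (r x0, 0))) a) (fun x0 : X => (r x0, 0)))
          (Defs.sigma inv alpha g a) x = (r x * r x * A x - Ap x, 0)).
    { unfold fsub, fmul, fstar, Defs.sigma. rewrite (HaE x), (HaE (alpha (inv g) x)).
      unfold Csub, Cmul, Cconj, Cre, Cim, Ap, A; simpl; unfold Cre; f_equal; ring. }
    rewrite E, Cmod_real.
    assert (HAp0 : 0 <= Ap x) by (apply HA0).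
    destruct (Rle_dec (Ap x) d) as [H|H].
    + rewrite Hr0 by auto. rewrite Rmult_0_l, Rmult_0_l.
      rewrite Rminus_0_l, Rabs_Ropp, Rabs_right; lra.
    + rewrite Hr1 by lra. replace (Ap x - d - Ap x) with (- d) by ring.
      rewrite Rabs_Ropp, Rabs_right; lra.
  - intros x. destruct (Rle_dec (Ap x) d) as [H|H].
    + left. rewrite Hr0; auto.
    + right. apply Hkey. lra.
Qed.

Lemma zero_prod (u z w : Defs.C) : u = (0,0) \/ w = (0,0) -> Cmod (Cmul (Cmul (Cconj u) z) w) = 0.
Proof.
  intros [->| ->]; unfold Cmul, Cconj, Cre, Cim; simpl;
  match goal with |- Cmod (?p, ?q) = 0 => replace p with 0 by ring; replace q with 0 by ring end;
  rewrite Cmod_real, Rabs_R0; auto.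
Qed.

Theorem mainTheorem15
  (G : Type) (mul : G -> G -> G) (e : G) (inv : G -> G)
  (X : Type) (opn : (X -> Prop) -> Prop) (alpha : G -> X -> X)
  (Hgrp : is_group mul e inv)
  (Htop : is_topology opn)
  (Hhaus : hausdorff opn)
  (Hlc : locally_compact opn)
  (Hnc : ~ is_compact opn (fun _ : X => True))
  (H3 : more_than_two_points X)
  (Hact : is_continuous_action mul e opn alpha)
  (Hcontr : forall K U : X -> Prop,
      is_compact opn K -> opn U -> (exists x, U x) ->
      exists g : G, forall x, K x -> U (alpha g x)) :
  G_separating opn inv alpha.
Proof.
  intros a b c eps Ha Hb Hc He.
  set (d := eps / 2). assert (Hd : 0 < d) by (unfold d; lra).
  assert (Hpt : exists x : X, True) by (destruct H3 as [x _]; exists x; auto).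
  destruct (proj2 (proj1 Ha) d Hd) as [Ka [HKa HKa']].
  destruct (proj2 (proj1 Hb) d Hd) as [Kb [HKb HKb']].
  destruct (getO opn (fun x => Cre (a x)) d Htop (rcont_Re opn a (proj1 (proj1 Ha))) Hpt)
    as [Oa [HOa [Hna HOa']]].
  destruct (getO opn (fun x => Cre (b x)) d Htop (rcont_Re opn b (proj1 (proj1 Hb))) Hpt)
    as [Ob [HOb [Hnb HOb']]].
  destruct (separate _ _ _ _ _ Hgrp Hact Htop Hhaus H3 Hcontr Oa Ob HOa Hna HOb Hnb)
    as [P1 [P2 [HP1 [HP2 [Hn1 [Hn2 [S1 [S2 Hdis]]]]]]]].
  destruct (Hcontr Ka P1 HKa HP1 Hn1) as [g Hg].
  destruct (Hcontr Kb P2 HKb HP2 Hn2) as [h Hh].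
  destruct (build_s mul e inv opn alpha Hgrp Htop Hact a Ha d Hd Ka HKa HKa' P1
    (fun x Px => HOa' x (S1 x Px)) g Hg) as [s [Hs [Hs1 Hs2]]].
  destruct (build_s mul e inv opn alpha Hgrp Htop Hact b Hb d Hd Kb HKb HKb' P2
    (fun x Px => HOb' x (S2 x Px)) h Hh) as [t [Ht [Ht1 Ht2]]].
  exists s, t, g, h. split; [auto|]. split; [auto|].
  split; [exists d; split; [unfold d; lra | auto]|].
  split; [exists d; split; [unfold d; lra | auto]|].
  exists 0. split; auto. intros x. unfold fmul, fstar.
  rewrite zero_prod; [lra|].
  destruct (Hs2 x) as [E|E1]; auto. destruct (Ht2 x) as [E|E2]; auto.
  exfalso. apply (Hdis x); auto.
Qed.
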